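(* Let $b\in\mathbb{C}\setminus\{0,1\}$ and, for integers $i\ge 1$, let \[ r_i(z)=z^{-i}\Big(b\,e^{z}+(1-b)\sum_{j=0}^{i-1}\frac{z^j}{j!}\Big)\in\mathbb{C}((z)). \] Then for all integers $i,j\ge 1$, \[ \big(r_i(z),\,r_j(-z)\big)=\operatorname{Res}_z\, r_i(z)\,r_j(-z)=0 . \]
   Context: $\mathbb{C}((z))$ denotes formal Laurent series in $z$ with finitely many negative powers; $e^{z}=\sum_{k\ge 0}z^k/k!$ as a formal power series. For $f,g\in\mathbb{C}((z))$ the bilinear form is $(f(z),g(z))=\operatorname{Res}_z f(z)g(z)$, the coefficient of $z^{-1}$ in the product $f(z)g(z)$. *)

(* Defs.v *)
From mathcomp Require Import all_boot all_order all_algebra.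
From mathcomp Require Import complex.
From mathcomp Require Import reals.
Set Implicit Arguments. Unset Strict Implicit. Unset Printing Implicit Defensive.
Import Order.TTheory GRing.Theory Num.Theory.
Local Open Scope ring_scope.

(* A formal Laurent series  z^{-lshift} * sum_{k>=0} lcoef k z^k  with
   coefficients in a ring K (finitely many negative powers). *)
Record laurent (K : Type) := Laurent { lshift : nat; lcoef : nat -> K }.

Section Laurent.
Variable K : comRingType.

Definition lcoeff (f : laurent K) (m : int) : K :=
  match (m + (lshift f)%:Z)%R with
  | Posz k => lcoef f k
  | Negz _ => 0
  end.

Definition lmul (f g : laurent K) : laurent K :=
  Laurent (lshift f + lshift g)
    (fun n => \sum_(k < n.+1) lcoef f k * lcoef g (n - k)%N).

(* substitution z |-> -z :  (-z)^{-s} sum a_k (-z)^k = z^{-s} sum (-1)^{k+s} a_k z^k *)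
Definition lneg (f : laurent K) : laurent K :=
  Laurent (lshift f) (fun k => (-1) ^+ (k + lshift f) * lcoef f k).

Definition lshiftby (i : nat) (f : laurent K) : laurent K :=
  Laurent (lshift f + i) (lcoef f).

Definition Res (f : laurent K) : K := lcoeff f (-1).

Definition lform (f g : laurent K) : K := Res (lmul f g).
End Laurent.

Section Series.
Variable K : fieldType.
Definition pser (a : nat -> K) : laurent K := Laurent 0 a.
Definition expz : laurent K := pser (fun k => (k`!%:R)^-1).
Definition exptrunc (i : nat) : laurent K :=
  pser (fun k => if (k < i)%N then (k`!%:R)^-1 else 0).
Definition lcomb (b c : K) (f g : laurent K) : laurent K :=
  Laurent 0 (fun k => b * lcoeff f k%:Z + c * lcoeff g k%:Z).
Definition r_ (b : K) (i : nat) : laurent K :=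
  lshiftby i (lcomb b (1 - b) expz (exptrunc i)).
End Series.

(* Main.v *)
Require Import Defs.
From mathcomp Require Import all_boot all_order all_algebra.
From mathcomp Require Import complex.
From mathcomp Require Import reals.
From mathcomp Require Import zify ring.
Import GRing.Theory Num.Theory.
Local Open Scope ring_scope.

Lemma coef_r (R : realType) (b : R[i]) i k :
  lcoef (r_ b i) k = (if (k < i)%N then 1 else b) / k`!%:R.
Proof.
rewrite /r_ /lshiftby /= /lcoeff /=.
rewrite addn0; by case: ifP => _; rewrite ?mulr0 ?addr0 // mulrBl mul1r addrC subrK.
Qed.

Theorem lemma1 (R : realType) (b : R[i]) (hb0 : b != 0) (hb1 : b != 1)
  (i j : nat) (hi : (1 <= i)%N) (hj : (1 <= j)%N) :
  lform (r_ b i) (lneg (r_ b j)) = 0.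
Proof.
rewrite /lform /Res /lcoeff /=.
have -> : (-1 + (i + j)%:Z)%R = Posz (i + j).-1.
  have hij : (0 < i + j)%N by rewrite addn_gt0 hi.
  by rewrite -{1}(prednK hij) -addn1 PoszD addrC addrK.
set N := (i + j).-1.
have HN : N = (i + j).-1 by [].
have fn0 : forall n, (n`!%:R : R[i]) != 0 by move=> n; rewrite pnatr_eq0 -lt0n fact_gt0.
have E : forall k : 'I_N.+1, lcoef (r_ b i) k * ((-1) ^+ (N - k + (0 + j)) * lcoef (r_ b j) (N - k)%N)
   = (b * (-1) ^+ j / N`!%:R) * ((-1) ^+ (N - k) *+ 'C(N, k)).
  move=> [k hk]; rewrite !coef_r add0n /=.
  have hkN : (k <= N)%N by [].
  have H1 : ((k < i)%N = ~~ (N - k < j)%N).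
    rewrite HN; apply/idP/idP => h; rewrite -ltnNge in h *; lia.
  have hC : ('C(N, k)%:R : R[i]) != 0 by rewrite pnatr_eq0 -lt0n bin_gt0.
  rewrite H1 -(bin_fact hkN) !natrM -[_ *+ 'C(N, k)]mulr_natr.
  rewrite exprD.
  case: (N - k < j)%N => /=; field; rewrite ?fn0 ?andbT //.
transitivity (\sum_(k < N.+1) (b * (-1) ^+ j / N`!%:R) * ((-1) ^+ (N - k) *+ 'C(N, k))).
  by apply: eq_bigr => k _; exact: E.
have S0 : \sum_(k < N.+1) (-1) ^+ (N - k) *+ 'C(N, k) = 0 :> R[i].
  have hN : (N != 0)%N by rewrite HN; lia.
  have : ((-1) + 1 : R[i]) ^+ N = 0 by rewrite addNr expr0n (negbTE hN).
  rewrite exprDn => H; rewrite -[RHS]H; apply: eq_bigr => k _; by rewrite expr1n mulr1.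
by rewrite -mulr_sumr S0 mulr0.
Qed.
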